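(* Let $A$ be a synaptic algebra, $p,q\in P$, $c:=(pqp+p^{\perp}q^{\perp}p^{\perp})^{1/2}$ and $s:=(pq^{\perp}p+p^{\perp}qp^{\perp})^{1/2}$. Then: (i) $(s^{\circ})^{\perp}p=p(s^{\circ})^{\perp}=(s^{\circ})^{\perp}q=q(s^{\circ})^{\perp}=(s^{\circ})^{\perp}\wedge p=(s^{\circ})^{\perp}\wedge q=p\wedge q$; (ii) $(c^{\circ})^{\perp}p=p(c^{\circ})^{\perp}=(c^{\circ})^{\perp}q^{\perp}=q^{\perp}(c^{\circ})^{\perp}=(c^{\circ})^{\perp}\wedge p=(c^{\circ})^{\perp}\wedge q^{\perp}=p\wedge q^{\perp}$; (iii) $(c^{\circ})^{\perp}p^{\perp}=p^{\perp}(c^{\circ})^{\perp}=(c^{\circ})^{\perp}q=q(c^{\circ})^{\perp}=(c^{\circ})^{\perp}\wedge p^{\perp}=(c^{\circ})^{\perp}\wedge q=p^{\perp}\wedge q$; (iv) $(s^{\circ})^{\perp}p^{\perp}=p^{\perp}(s^{\circ})^{\perp}=(s^{\circ})^{\perp}q^{\perp}=q^{\perp}(s^{\circ})^{\perp}=(s^{\circ})^{\perp}\wedge p^{\perp}=(s^{\circ})^{\perp}\wedge q^{\perp}=p^{\perp}\wedge q^{\perp}$.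
   Context: Synaptic algebra (Foulis): $R$ is a real linear associative algebra with unit $1$, and $A\subseteq R$ is a real linear subspace with $1\in A$. For $a,b\in A$ write $aCb$ iff $ab=ba$; $C(a):=\{b\in A: aCb\}$; $CC(a):=\{b\in A: bCd \text{ for all } d\in C(a)\}$. $A$ is a synaptic algebra with enveloping algebra $R$ iff: (SA1) $A$ is a partially ordered archimedean real linear space with positive cone $A^+$, $1$ is an order unit, $\|\cdot\|$ the order-unit norm; (SA2) $a\in A\Rightarrow a^2\in A^+$; (SA3) $a,b\in A^+\Rightarrow aba\in A^+$; (SA4) if $a\in A$, $b\in A^+$, $aba=0$ then $ab=ba=0$; (SA5) if $a\in A^+$ there is $b\in A^+\cap CC(a)$ with $b^2=a$; (SA6) for $a\in A$ there is $p=p^2\in A$ with $ab=0\Leftrightarrow pb=0$ for all $b\in A$; (SA7) if $1\le a$ there is $b\in A$ with $ab=ba=1$; (SA8) if $a,b\in A$, $a_1\le a_2\le\cdots$ are pairwise commuting elements of $C(b)$ with $\|a-a_n\|\to0$, then $a\in C(b)$. $A$ is nondegenerate. $P:=\{p\in A:p=p^2\}$ with the inherited order is an orthomodular lattice with $p^{\perp}:=1-p$, meet $\wedge$, join $\vee$. For $0\le a$, $a^{1/2}$ is its unique positive square root in $A$. The carrier $a^{\circ}$ of $a\in A$ is the unique projection such that for all $b\in A$, $ab=0\Leftrightarrow a^{\circ}b=0$. *)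

(* Defs.v *)
From HB Require Import structures.
From mathcomp Require Import all_boot all_order all_algebra.
From mathcomp Require Import boolp classical_sets reals.
Set Implicit Arguments. Unset Strict Implicit. Unset Printing Implicit Defensive.
Import Order.TTheory GRing.Theory Num.Theory.
Local Open Scope ring_scope.
Local Open Scope classical_set_scope.

Section SynapticDefs.
Variables (R : realType) (E : algType R).
(* A : the underlying subspace of the enveloping algebra E,
   pos : the positive cone A^+. *)
Variables (A pos : set E).

Definition sa_le (a b : E) : Prop := pos (b - a).

Definition sa_C (a : E) : set E := [set b | A b /\ a * b = b * a].
Definition sa_CC (a : E) : set E :=
  [set b | A b /\ forall d, sa_C a d -> b * d = d * b].

Definition sa_norm (a : E) : R :=
  inf [set l : R | 0 <= l /\ sa_le (- (l *: 1)) a /\ sa_le a (l *: 1)].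

Record synaptic : Prop := Synaptic {
  sa_A0 : A 0;
  sa_A1 : A 1;
  sa_Alin : forall (k : R) a b, A a -> A b -> A (k *: a + b);
  (* SA1 : partially ordered (by the cone pos) archimedean real linear space,
     1 an order unit *)
  sa_posA : forall a, pos a -> A a;
  sa_pos0 : pos 0;
  sa_posD : forall a b, pos a -> pos b -> pos (a + b);
  sa_posZ : forall (k : R) a, 0 <= k -> pos a -> pos (k *: a);
  sa_posN : forall a, pos a -> pos (- a) -> a = 0;
  sa_archi : forall a b, A a -> A b ->
      (forall n : nat, sa_le (n%:R *: a) b) -> sa_le a 0;
  sa_unit : forall a, A a ->
      exists n : nat, sa_le (- (n%:R *: 1)) a /\ sa_le a (n%:R *: 1);
  sa_sq : forall a, A a -> pos (a * a);
  sa_aba : forall a b, pos a -> pos b -> pos (a * b * a);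
  sa_aba0 : forall a b, A a -> pos b -> a * b * a = 0 -> a * b = 0 /\ b * a = 0;
  sa_sqrt : forall a, pos a -> exists b, pos b /\ sa_CC a b /\ b * b = a;
  sa_carrier : forall a, A a -> exists p, A p /\ p * p = p /\
      (forall b, A b -> (a * b = 0 <-> p * b = 0));
  sa_inv : forall a, A a -> sa_le 1 a -> exists b, A b /\ a * b = 1 /\ b * a = 1;
  sa_mono : forall a b (an : nat -> E), A a -> A b ->
      (forall n, A (an n)) ->
      (forall n, sa_le (an n) (an n.+1)) ->
      (forall m n, an m * an n = an n * an m) ->
      (forall n, sa_C b (an n)) ->
      (forall eps : R, 0 < eps -> exists N, forall n, (N <= n)%N ->
            sa_norm (a - an n) < eps) ->
      sa_C b a;
  sa_nondeg : (1 : E) <> 0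
}.

Definition sa_proj (p : E) : Prop := A p /\ p * p = p.
Definition sa_perp (p : E) : E := 1 - p.

Definition sa_meet (p q : E) : E :=
  xget 0 [set r | sa_proj r /\ sa_le r p /\ sa_le r q /\
     forall t, sa_proj t -> sa_le t p -> sa_le t q -> sa_le t r].

Definition sa_sqrtA (a : E) : E := xget 0 [set b | pos b /\ b * b = a].

Definition sa_carr (a : E) : E :=
  xget 0 [set p | sa_proj p /\ forall b, A b -> (a * b = 0 <-> p * b = 0)].

End SynapticDefs.

(* Main.v *)
Require Import Defs.
From HB Require Import structures.
From mathcomp Require Import all_boot all_order all_algebra.
From mathcomp Require Import boolp classical_sets reals.
Import Order.TTheory GRing.Theory Num.Theory.
Local Open Scope ring_scope.
Import GRing.Theory.
Local Open Scope ring_scope.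

Lemma zc_next (V : zmodType) (u a r r1 : V) : r = a + r1 -> u + r = a + (u + r1).
Proof. by move=> ->; rewrite addrCA. Qed.
Lemma zc_last (V : zmodType) (a : V) : a = a + 0.
Proof. by rewrite addr0. Qed.
Lemma zc_cancel (V : zmodType) (a r r' : V) : r = - a + r' -> r' = 0 -> a + r = 0.
Proof. by move=> -> ->; rewrite addr0 addrN. Qed.
Lemma zc_cancelN (V : zmodType) (b r r' : V) : r = b + r' -> r' = 0 -> - b + r = 0.
Proof. by move=> -> ->; rewrite addr0 addNr. Qed.
Lemma zc_start (V : zmodType) (x y : V) : x - y = 0 -> x = y.
Proof. by move/eqP; rewrite subr_eq0 => /eqP. Qed.

Ltac zpull := first [ reflexivity | eapply zc_next; zpull | eapply zc_last ].
Ltac zsolve := match goal with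
 | |- 0 = 0 => reflexivity
 | |- - ?b + ?r = 0 => eapply (@zc_cancelN _ b); [zpull | zsolve]
 | |- ?a + ?r = 0 => eapply (@zc_cancel _ a); [zpull | zsolve]
 end.
Ltac ncexp := rewrite ?(mulrDl, mulrDr, mulrBl, mulrBr, mulNr, mulrN, opprD, opprK, opprB, mulrA, mul1r, mulr1, mul0r, mulr0, addr0, add0r, oppr0).
Ltac ncring := apply: zc_start; ncexp; rewrite -?addrA; zsolve.
Lemma A_add {R : realType} {E : algType R} {A pos : set E} (HA : synaptic A pos) {a b} :
  A a -> A b -> A (a + b).
Proof. by move=> Ha Hb; have := sa_Alin HA 1 Ha Hb; rewrite scale1r. Qed.

Lemma A_scale {R : realType} {E : algType R} {A pos : set E} (HA : synaptic A pos) (k : R) {a} :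
  A a -> A (k *: a).
Proof. by move=> Ha; have := sa_Alin HA k Ha (sa_A0 HA); rewrite addr0. Qed.

Lemma A_opp {R : realType} {E : algType R} {A pos : set E} (HA : synaptic A pos) {a} :
  A a -> A (- a).
Proof. by move=> Ha; have := A_scale HA (-1) Ha; rewrite scaleN1r. Qed.

Lemma A_sub {R : realType} {E : algType R} {A pos : set E} (HA : synaptic A pos) {a b} :
  A a -> A b -> A (a - b).
Proof. by move=> Ha Hb; exact: (A_add HA Ha (A_opp HA Hb)). Qed.

Lemma A_sq {R : realType} {E : algType R} {A pos : set E} (HA : synaptic A pos) {a} :
  A a -> A (a * a).
Proof. by move=> Ha; apply: (sa_posA HA); apply: (sa_sq HA). Qed.

Lemma A_jordan {R : realType} {E : algType R} {A pos : set E} (HA : synaptic A pos) {a b} :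
  A a -> A b -> A (a * b + b * a).
Proof.
move=> Ha Hb.
have -> : a * b + b * a = (a + b) * (a + b) - a * a - b * b by ncring.
exact: (A_sub HA (A_sub HA (A_sq HA (A_add HA Ha Hb)) (A_sq HA Ha)) (A_sq HA Hb)).
Qed.

Lemma idemA {E : ringType} {p : E} (H : p * p = p) (x : E) : x * p * p = x * p.
Proof. by rewrite -mulrA H. Qed.
Lemma zeroA {E : ringType} {a b : E} (H : a * b = 0) (x : E) : x * a * b = 0.
Proof. by rewrite -mulrA H mulr0. Qed.

Lemma A_quad {R : realType} {E : algType R} {A pos : set E} (HA : synaptic A pos) {a b} :
  A a -> A b -> A (a * b * a).
Proof.
move=> Ha Hb.
have H1 := A_jordan HA Ha (A_jordan HA Ha Hb).
have H2 := A_jordan HA (A_sq HA Ha) Hb.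
have := A_scale HA (2^-1) (A_sub HA H1 H2).
suff -> : a * (a * b + b * a) + (a * b + b * a) * a - (a * a * b + b * (a * a))
   = (a * b * a) *+ 2.
  by rewrite -scaler_nat scalerA mulVf ?scale1r // pnatr_eq0.
rewrite mulr2n; ncring.
Qed.

Lemma pos1 {R : realType} {E : algType R} {A pos : set E} (HA : synaptic A pos) : pos 1.
Proof. by have := sa_sq HA (sa_A1 HA); rewrite mulr1. Qed.

Lemma proj_pos {R : realType} {E : algType R} {A pos : set E} (HA : synaptic A pos) {r} :
  sa_proj A r -> pos r.
Proof. by case=> Ar Hr; have := sa_sq HA Ar; rewrite Hr. Qed.

Lemma sq0 {R : realType} {E : algType R} {A pos : set E} (HA : synaptic A pos) {a} :
  A a -> a * a = 0 -> a = 0.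
Proof.
move=> Aa H; have [H1 _] := sa_aba0 HA Aa (pos1 HA) (ltac:(by rewrite mulr1)).
by rewrite mulr1 in H1.
Qed.

Lemma hard {R : realType} {E : algType R} {A pos : set E} (HA : synaptic A pos) {x y} :
  pos x -> A y -> x * x * y = 0 -> x * y = 0.
Proof.
move=> px Ay H.
have Ax := sa_posA HA px.
have h2 : y * (x * x) = 0.
  have [] := sa_aba0 HA Ay (sa_sq HA Ax) => //.
  by rewrite -mulrA H mulr0.
have h2' z : z * x * x * y = 0 by rewrite -!mulrA (mulrA x) H mulr0.
have h2y : y * x * x = 0 by rewrite -mulrA h2.
have hw : x * y * x = 0.
  apply: (sq0 HA (A_quad HA Ax Ay)).
  by rewrite !mulrA h2' !mul0r.
have hw' z : z * x * y * x = 0 by rewrite -!mulrA (mulrA x) hw mulr0.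
have Aa := A_jordan HA Ax Ay.
have ha2 : (x * y + y * x) * (x * y + y * x) = x * y * y * x.
  rewrite !(mulrDl, mulrDr) !mulrA hw hw' h2y !mul0r !add0r addr0.
  by [].
have ha0 : x * y + y * x = 0.
  apply: (sq0 HA Aa); apply: (sq0 HA (A_sq HA Aa)).
  by rewrite ha2 !mulrA h2' !mul0r.
have hxyy : x * (y * y) = 0.
  have [] := sa_aba0 HA Ax (sa_sq HA Ay) => //.
  by rewrite mulrA -ha2 ha0 mulr0.
have hyx : y * x = - (x * y) by apply/eqP; rewrite -addr_eq0 addrC ha0.
have hyxy : y * x * y = 0 by rewrite hyx mulNr -mulrA hxyy oppr0.
by have [] := sa_aba0 HA Ay px hyxy.
Qed.

Lemma proj_perp {R : realType} {E : algType R} {A pos : set E} (HA : synaptic A pos) {p} :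
  sa_proj A p -> sa_proj A (1 - p).
Proof.
case=> Ap Hp; split; first exact: (A_sub HA (sa_A1 HA) Ap).
by ncexp; rewrite Hp; ncring.
Qed.

Lemma le_proj {R : realType} {E : algType R} {A pos : set E} (HA : synaptic A pos) {t p} :
  sa_proj A t -> sa_proj A p -> sa_le pos t p -> t * p = t /\ p * t = t.
Proof.
move=> Pt Pp Hle.
have Pp' := proj_perp HA Pp.
have H1 := sa_aba HA (proj_pos HA Pp') Hle.
have H2 := sa_aba HA (proj_pos HA Pp') (proj_pos HA Pt).
have E1 : (1 - p) * (p - t) * (1 - p) = - ((1 - p) * t * (1 - p)).
  case: Pp => _ Hp. apply: zc_start; ncexp; rewrite ?(idemA Hp) ?Hp; ncexp.
  rewrite -?addrA; zsolve.
rewrite E1 in H1.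
have H0 := sa_posN HA H2 H1.
have [Ha Hb] := sa_aba0 HA Pp'.1 (proj_pos HA Pt) H0.
split.
  by apply/eqP; rewrite eq_sym -subr_eq0 -{1}(mulr1 t) -mulrBr Hb.
by apply/eqP; rewrite eq_sym -subr_eq0 -{1}(mul1r t) -mulrBl Ha.
Qed.

Lemma le_of {R : realType} {E : algType R} {A pos : set E} (HA : synaptic A pos) {u v} :
  sa_proj A u -> sa_proj A v -> u * v = u -> v * u = u -> sa_le pos u v.
Proof.
move=> [Au Hu] [Av Hv] H1 H2; rewrite /sa_le.
have -> : v - u = (v - u) * (v - u) by ncexp; rewrite Hu Hv H1 H2; ncring.
exact: (sa_sq HA (A_sub HA Av Au)).
Qed.

Lemma meet_eq {R : realType} {E : algType R} {A pos : set E} (HA : synaptic A pos) {a b m} :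
  sa_proj A a -> sa_proj A b -> sa_proj A m ->
  m * a = m -> a * m = m -> m * b = m -> b * m = m ->
  (forall t, sa_proj A t -> t * a = t -> a * t = t -> t * b = t -> b * t = t ->
     t * m = t /\ m * t = t) ->
  sa_meet A pos a b = m.
Proof.
move=> Pa Pb Pm h1 h2 h3 h4 hg.
have Pmm : [/\ sa_proj A m, sa_le pos m a, sa_le pos m b &
   forall t, sa_proj A t -> sa_le pos t a -> sa_le pos t b -> sa_le pos t m].
  split => //; first exact: (le_of HA Pm Pa h1 h2).
    exact: (le_of HA Pm Pb h3 h4).
  move=> t Pt /(le_proj HA Pt Pa) [g1 g2] /(le_proj HA Pt Pb) [g3 g4].
  by have [] := hg t Pt g1 g2 g3 g4; apply: (le_of HA Pt Pm).
apply: xget_unique.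
  by case: Pmm => ? ? ? ?; split => //; split => //; split.
move=> y [Py [ya [yb yg]]].
case: Pmm => _ ma mb mg.
have l1 := mg y Py ya yb.
have l2 := yg m Pm ma mb.
rewrite /sa_le in l1 l2.
apply/eqP; rewrite -subr_eq0; apply/eqP.
by apply: (sa_posN HA l2); rewrite opprB.
Qed.

Lemma meet_comm {R : realType} {E : algType R} {A pos : set E} (HA : synaptic A pos) {a e} :
  sa_proj A a -> sa_proj A e -> a * e = e * a -> sa_meet A pos e a = a * e.
Proof.
move=> Pa Pe hc.
have [Aa Ha] := Pa; have [Ae He] := Pe.
have Pm : sa_proj A (a * e).
  split; last by rewrite -mulrA (mulrA e) -hc -mulrA He mulrA Ha.
  have -> : a * e = e * a * e by rewrite -hc -mulrA He.
  exact: (A_quad HA Ae Aa).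
apply: (meet_eq HA) => //.
- by rewrite -mulrA He.
- by rewrite mulrA -hc -mulrA He.
- by rewrite -mulrA -hc mulrA Ha.
- by rewrite mulrA Ha.
- move=> t Pt t1 t2 t3 t4; split; first by rewrite mulrA t3 t1.
  by rewrite -mulrA t2 t4.
Qed.

Lemma proj_mul {R : realType} {E : algType R} {A pos : set E} (HA : synaptic A pos) {a e} :
  sa_proj A a -> sa_proj A e -> a * e = e * a -> sa_proj A (a * e).
Proof.
move=> [Aa Ha] [Ae He] hc.
split; last by rewrite -mulrA (mulrA e) -hc -mulrA He mulrA Ha.
have -> : a * e = e * a * e by rewrite -hc -mulrA He.
exact: (A_quad HA Ae Aa).
Qed.

Lemma gen {R : realType} {E : algType R} {A pos : set E} (HA : synaptic A pos) {a b e} :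
  sa_proj A a -> sa_proj A b -> sa_proj A e ->
  a * e = e * a -> b * e = e * b -> a * e = b * e ->
  (forall t, sa_proj A t -> t * a = t -> a * t = t -> t * b = t -> b * t = t ->
     t * e = t /\ e * t = t) ->
  let M := sa_meet A pos a b in
  e * a = M /\ a * e = M /\ e * b = M /\ b * e = M /\
  sa_meet A pos e a = M /\ sa_meet A pos e b = M.
Proof.
move=> Pa Pb Pe hae hbe hab hg M.
have [Aa Ha] := Pa; have [Ab Hb] := Pb; have [Ae He] := Pe.
have HM : M = a * e.
  apply: (meet_eq HA) => //.
  - exact: (proj_mul HA Pa Pe hae).
  - by rewrite -mulrA -hae mulrA Ha.
  - by rewrite mulrA Ha.
  - by rewrite hab -mulrA -hbe mulrA Hb.
  - by rewrite hab mulrA Hb.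
  - move=> t Pt t1 t2 t3 t4; have [g1 g2] := hg t Pt t1 t2 t3 t4.
    by split; [rewrite mulrA t1 g1 | rewrite -mulrA g2 t2].
rewrite HM (meet_comm HA Pa Pe hae) (meet_comm HA Pb Pe hbe) -hae -hbe hab.
by do !split.
Qed.

Lemma comm_e {R : realType} {E : algType R} {A pos : set E} (HA : synaptic A pos) {e f D r} :
  A e -> A f -> e + f = 1 -> f * e = 0 -> e * f = 0 -> D * e = 0 ->
  (forall y, A y -> D * y = 0 -> f * y = 0) ->
  A r -> r * D = D * r -> r * e = e * r.
Proof.
move=> Ae Af hef1 fe ef De hX Ar hrD.
have h1 : f * (r * e + e * r) = 0.
  apply: hX; first exact: (A_jordan HA Ar Ae).
  by rewrite mulrDr !mulrA De mul0r addr0 -hrD -mulrA De mulr0.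
have h2 : f * r * e = 0 by move: h1; rewrite mulrDr !mulrA fe mul0r addr0.
have h3 : e * r * e = r * e.
  have : (e + f) * r * e = r * e by rewrite hef1 mul1r.
  by rewrite mulrDl mulrDl h2 addr0.
have Ag : A (e * r * f + f * r * e).
  have -> : e * r * f + f * r * e = (e + f) * r * (e + f) - e * r * e - f * r * f by ncring.
  rewrite hef1 mul1r mulr1.
  exact: (A_sub HA (A_sub HA Ar (A_quad HA Ae Ar)) (A_quad HA Af Ar)).
rewrite h2 addr0 in Ag.
have g0 : e * r * f = 0.
  by apply: (sq0 HA Ag); rewrite !mulrA (zeroA fe) !mul0r.
have h4 : e * r * e = e * r.
  have : e * r * (e + f) = e * r by rewrite hef1 mulr1.
  by rewrite mulrDr g0 addr0.
by rewrite -h3 h4.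
Qed.

Lemma core {R : realType} {E : algType R} {A pos : set E} (HA : synaptic A pos) {p q x f} :
  sa_proj A p -> sa_proj A q -> pos x -> x * x = (p - q) * (p - q) -> sa_proj A f ->
  (forall y, A y -> (x * y = 0 <-> f * y = 0)) ->
  let e := 1 - f in
  let M := sa_meet A pos p q in
  let N := sa_meet A pos (1 - p) (1 - q) in
  (e * p = M /\ p * e = M /\ e * q = M /\ q * e = M /\
   sa_meet A pos e p = M /\ sa_meet A pos e q = M) /\
  (e * (1 - p) = N /\ (1 - p) * e = N /\ e * (1 - q) = N /\ (1 - q) * e = N /\
   sa_meet A pos e (1 - p) = N /\ sa_meet A pos e (1 - q) = N).
Proof.
move=> Pp Pq px hxx Pf Hc e M N.
have Pe : sa_proj A e := proj_perp HA Pf.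
have [Ap Hp] := Pp; have [Aq Hq] := Pq; have [Af Hf] := Pf; have [Ae He] := Pe.
have fe : f * e = 0 by rewrite /e mulrBr mulr1 Hf subrr.
have ef : e * f = 0 by rewrite /e mulrBl mul1r Hf subrr.
have hef1 : e + f = 1 by rewrite /e subrK.
clearbody e.
set D := (p - q) * (p - q) in hxx.
have hX y : A y -> D * y = 0 -> f * y = 0.
  move=> Ay HD; apply/(Hc y Ay); apply: (hard HA px Ay).
  by rewrite hxx.
have De : D * e = 0.
  by rewrite -hxx -mulrA ((Hc e Ae).2 fe) mulr0.
have hpD : p * D = D * p.
  rewrite /D; apply: zc_start; ncexp; rewrite ?(idemA Hp, idemA Hq, Hp, Hq); ncexp.
  rewrite -?addrA; zsolve.
have hqD : q * D = D * q.
  rewrite /D; apply: zc_start; ncexp; rewrite ?(idemA Hp, idemA Hq, Hp, Hq); ncexp.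
  rewrite -?addrA; zsolve.
have hpe : p * e = e * p := comm_e HA Ae Af hef1 fe ef De hX Ap hpD.
have hqe : q * e = e * q := comm_e HA Ae Af hef1 fe ef De hX Aq hqD.
have hpq : p * e = q * e.
  have Ag : A ((p - q) * e).
    rewrite mulrBl; apply: (A_sub HA).
    - exact: (proj_mul HA Pp Pe hpe).1.
    - exact: (proj_mul HA Pq Pe hqe).1.
  have hc : (p - q) * e = e * (p - q) by rewrite mulrBl mulrBr hpe hqe.
  have : (p - q) * e = 0.
    apply: (sq0 HA Ag).
    by rewrite -mulrA (mulrA e) -hc -mulrA He mulrA.
  by move/eqP; rewrite mulrBl subr_eq0 => /eqP.
have hT t : sa_proj A t -> (p - q) * t = 0 -> t * e = t /\ e * t = t.
  move=> Pt ht.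
  have ft : f * t = 0 by apply: hX; [exact: Pt.1 | rewrite /D -mulrA ht mulr0].
  have [_ tf] := sa_aba0 HA Af (proj_pos HA Pt) (ltac:(by rewrite ft mul0r)).
  have et : e = 1 - f by rewrite -hef1 addrK.
  by split; rewrite et ?mulrBr ?mulrBl ?mulr1 ?mul1r ?tf ?ft subr0.
split.
  apply: (gen HA Pp Pq Pe hpe hqe hpq).
  move=> t Pt t1 t2 t3 t4; apply: hT => //.
  by rewrite mulrBl t2 t4 subrr.
apply: (gen HA (proj_perp HA Pp) (proj_perp HA Pq) Pe).
- by rewrite mulrBl mulrBr mul1r mulr1 hpe.
- by rewrite mulrBl mulrBr mul1r mulr1 hqe.
- by rewrite !mulrBl hpq.
move=> t Pt t1 t2 t3 t4; apply: hT => //.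
have pt : p * t = 0 by move: t2; rewrite mulrBl mul1r => /eqP; rewrite subr_eq addrC -subr_eq subrr eq_sym => /eqP.
have qt : q * t = 0 by move: t4; rewrite mulrBl mul1r => /eqP; rewrite subr_eq addrC -subr_eq subrr eq_sym => /eqP.
by rewrite mulrBl pt qt subrr.
Qed.

Lemma sqrt_spec {R : realType} {E : algType R} {A pos : set E} (HA : synaptic A pos) {a} :
  pos a -> pos (sa_sqrtA pos a) /\ sa_sqrtA pos a * sa_sqrtA pos a = a.
Proof.
move=> pa; have [b [pb [_ hb]]] := sa_sqrt HA pa.
exact: (@xgetPex _ 0 [set b | pos b /\ b * b = a] (ex_intro _ b (conj pb hb))).
Qed.

Lemma carr_spec {R : realType} {E : algType R} {A pos : set E} (HA : synaptic A pos) {a} :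
  A a -> sa_proj A (sa_carr A a) /\
    forall b, A b -> (a * b = 0 <-> sa_carr A a * b = 0).
Proof.
move=> Aa; have [r [Ar [Hr H]]] := sa_carrier HA Aa.
exact: (@xgetPex _ 0 [set p | sa_proj A p /\ forall b, A b -> (a * b = 0 <-> p * b = 0)]
  (ex_intro _ r (conj (conj Ar Hr) H))).
Qed.

Theorem corollary4p5 (R : realType) (E : algType R) (A pos : set E)
  (HA : synaptic A pos) (p q : E) (Hp : sa_proj A p) (Hq : sa_proj A q) :
  let c := sa_sqrtA pos (p * q * p + sa_perp p * sa_perp q * sa_perp p) in
  let s := sa_sqrtA pos (p * sa_perp q * p + sa_perp p * q * sa_perp p) in
  let sc := sa_perp (sa_carr A s) in
  let cc := sa_perp (sa_carr A c) in
  let meet := sa_meet A pos in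
  (* (i) *)
  (sc * p = meet p q /\ p * sc = meet p q /\ sc * q = meet p q /\
   q * sc = meet p q /\ meet sc p = meet p q /\ meet sc q = meet p q) /\
  (* (ii) *)
  (cc * p = meet p (sa_perp q) /\ p * cc = meet p (sa_perp q) /\
   cc * sa_perp q = meet p (sa_perp q) /\ sa_perp q * cc = meet p (sa_perp q) /\
   meet cc p = meet p (sa_perp q) /\ meet cc (sa_perp q) = meet p (sa_perp q)) /\
  (* (iii) *)
  (cc * sa_perp p = meet (sa_perp p) q /\ sa_perp p * cc = meet (sa_perp p) q /\
   cc * q = meet (sa_perp p) q /\ q * cc = meet (sa_perp p) q /\
   meet cc (sa_perp p) = meet (sa_perp p) q /\ meet cc q = meet (sa_perp p) q) /\
  (* (iv) *)
  (sc * sa_perp p = meet (sa_perp p) (sa_perp q) /\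
   sa_perp p * sc = meet (sa_perp p) (sa_perp q) /\
   sc * sa_perp q = meet (sa_perp p) (sa_perp q) /\
   sa_perp q * sc = meet (sa_perp p) (sa_perp q) /\
   meet sc (sa_perp p) = meet (sa_perp p) (sa_perp q) /\
   meet sc (sa_perp q) = meet (sa_perp p) (sa_perp q)).
Proof.
move=> c s sc cc meet.
have Pp' := proj_perp HA Hp; have Pq' := proj_perp HA Hq.
have [Ap Hpp] := Hp; have [Aq Hqq] := Hq.
have qq : 1 - (1 - q) = q by rewrite opprB addrC subrK.
have pS : pos (p * sa_perp q * p + sa_perp p * q * sa_perp p).
  exact: (sa_posD HA (sa_aba HA (proj_pos HA Hp) (proj_pos HA Pq')) (sa_aba HA (proj_pos HA Pp') (proj_pos HA Hq))).
have pC : pos (p * q * p + sa_perp p * sa_perp q * sa_perp p).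
  exact: (sa_posD HA (sa_aba HA (proj_pos HA Hp) (proj_pos HA Hq)) (sa_aba HA (proj_pos HA Pp') (proj_pos HA Pq'))).
have [ps ss] := sqrt_spec HA pS.
have [pc cc2] := sqrt_spec HA pC.
rewrite -/s in ps ss; rewrite -/c in pc cc2.
have hs : s * s = (p - q) * (p - q).
  rewrite ss /sa_perp; apply: zc_start; ncexp; rewrite ?(idemA Hpp, idemA Hqq, Hpp, Hqq); ncexp.
  rewrite -?addrA; zsolve.
have hc : c * c = (p - (1 - q)) * (p - (1 - q)).
  rewrite cc2 /sa_perp; apply: zc_start; ncexp; rewrite ?(idemA Hpp, idemA Hqq, Hpp, Hqq); ncexp.
  rewrite -?addrA; zsolve.
have [Pfs Hfs] := carr_spec HA (sa_posA HA ps).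
have [Pfc Hfc] := carr_spec HA (sa_posA HA pc).
have [B1 B4] := core HA Hp Hq ps hs Pfs Hfs.
have [B2 B3] := core HA Hp Pq' pc hc Pfc Hfc.
rewrite qq in B3.
exact: (conj B1 (conj B2 (conj B3 B4))).
Qed.
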